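(* Let $R$ be a commutative ring with $1$ and $I$ a strongly pure ideal of $R$. Then $I$ is a regular ideal, i.e. $I$ is generated by a set of idempotent elements of $R$.
   Context: An ideal $I$ of a commutative ring $R$ is called strongly pure if $\operatorname{Ann}(f)+Rf=R$ for all $f\in I$. An ideal is called regular if it is generated by a set of idempotents. *)

(* Defs.v *)
From HB Require Import structures.
From mathcomp Require Import all_boot all_order all_algebra.
Set Implicit Arguments. Unset Strict Implicit. Unset Printing Implicit Defensive.
Import GRing.Theory.
Local Open Scope ring_scope.

Definition is_ideal (R : comPzRingType) (I : R -> Prop) : Prop :=
  [/\ I 0,
      (forall x y, I x -> I y -> I (x + y)) &
      (forall r x, I x -> I (r * x))].

Definition Ann (R : comPzRingType) (f : R) : R -> Prop := fun a => a * f = 0.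

Definition principal (R : comPzRingType) (f : R) : R -> Prop :=
  fun x => exists r, x = r * f.

Definition ideal_sum (R : comPzRingType) (J K : R -> Prop) : R -> Prop :=
  fun x => exists j k, [/\ J j, K k & x = j + k].

Definition strongly_pure (R : comPzRingType) (I : R -> Prop) : Prop :=
  forall f, I f -> forall x : R, ideal_sum (Ann f) (principal f) x.

Definition ideal_gen (R : comPzRingType) (S : R -> Prop) : R -> Prop :=
  fun x => exists (n : nat) (r s : 'I_n -> R),
    (forall i, S (s i)) /\ x = \sum_(i < n) r i * s i.

Definition regular_ideal (R : comPzRingType) (I : R -> Prop) : Prop :=
  exists S : R -> Prop, (forall e, S e -> e * e = e) /\
    (forall x, I x <-> ideal_gen S x).

(* Main.v *)
Require Import Defs.
From mathcomp Require Import all_boot all_order all_algebra.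
Import GRing.Theory.
Local Open Scope ring_scope.

Theorem proposition2p5 (R : comPzRingType) (I : R -> Prop) :
  is_ideal I -> strongly_pure I -> regular_ideal I.
Proof.
move=> [I0 ID IM] Hsp.
exists (fun e => I e /\ e * e = e); split; first by move=> e [].
move=> x; split.
- move=> Ix.
  have [j [k [Hj [r ->] H1]]] := Hsp x Ix 1.
  rewrite /Ann in Hj.
  have hf : x = r * x * x.
    by rewrite -{1}(mul1r x) H1 mulrDl Hj add0r.
  exists 1%N, (fun _ => x), (fun _ => r * x); split.
  + move=> _; split; first exact: IM.
    by rewrite mulrA [r * x * r]mulrC -mulrA -hf.
  + by rewrite big_ord1 {1}hf mulrC.
- move=> [n [r [s [Hs ->]]]].
  apply: (big_ind (fun y => I y)) => // i _.
  by apply: IM; case: (Hs i).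
Qed.
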